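(* If $0<|a|<1$ then $a\in\mathcal{E}$. If $1<|a|\le2$ then $a\in\mathcal{B}$. The set $\mathcal{B}$ is bounded.
   Context: $B_a(z)=z^3\frac{z-a}{1-\bar a z}$, with superattracting fixed points $0,\infty$ and basins $A(0),A(\infty)$. For $a\neq0$, $|a|\neq1$, the free critical points are $c_\pm=\frac{a}{3|a|^2}\left(2+|a|^2\pm\sqrt{(|a|^2-4)(|a|^2-1)}\right)$ (square root of a negative $x$ meaning $i\sqrt{-x}$). A parameter $a$ ($|a|\neq1$) is escaping if $c_+\in A(0)\cup A(\infty)$; $\mathcal{E}$ is the set of escaping parameters and $\mathcal{B}$ is the set of non-escaping parameters ($|a|\neq 1$, $c_+\notin A(0)\cup A(\infty)$). *)

(* Defs.v *)
From Stdlib Require Import Reals Lra.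
Open Scope R_scope.

Definition Cx : Type := (R * R)%type.
Definition C0 : Cx := (0, 0).
Definition C1 : Cx := (1, 0).
Definition Cadd (z w : Cx) : Cx := (fst z + fst w, snd z + snd w).
Definition Csub (z w : Cx) : Cx := (fst z - fst w, snd z - snd w).
Definition Cmul (z w : Cx) : Cx :=
  (fst z * fst w - snd z * snd w, fst z * snd w + snd z * fst w).
Definition Cnorm2 (z : Cx) : R := fst z * fst z + snd z * snd z.
Definition Cinv (z : Cx) : Cx := (fst z / Cnorm2 z, - snd z / Cnorm2 z).
Definition Cdiv (z w : Cx) : Cx := Cmul z (Cinv w).
Definition Cconj (z : Cx) : Cx := (fst z, - snd z).
Definition Cscale (r : R) (z : Cx) : Cx := (r * fst z, r * snd z).
Definition Cnorm (z : Cx) : R := sqrt (Cnorm2 z).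

Definition Ceq_dec (z w : Cx) : {z = w} + {z <> w}.
Proof.
  destruct z as [x y], w as [u v].
  destruct (Req_EM_T x u) as [e1|n1]; [destruct (Req_EM_T y v) as [e2|n2]|].
  - left; subst; reflexivity.
  - right; intro H; inversion H; contradiction.
  - right; intro H; inversion H; contradiction.
Defined.

(* Points of the Riemann sphere: Some z is z in Cx, None is infinity. *)
Definition Csphere : Type := option Cx.

(* B_a(z) = z^3 (z - a) / (1 - conj(a) z), extended to the Riemann sphere:
   B_a(infinity) = infinity, and the pole 1/conj(a) is sent to infinity
   (for |a| <> 1 the numerator does not vanish there). *)
Definition Bmap (a : Cx) (w : Csphere) : Csphere :=
  match w with
  | None => None
  | Some z =>
      let d := Csub C1 (Cmul (Cconj a) z) in
      if Ceq_dec d C0 then None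
      else Some (Cdiv (Cmul (Cmul z (Cmul z z)) (Csub z a)) d)
  end.

Definition orbit (a : Cx) (n : nat) (w : Csphere) : Csphere :=
  Nat.iter n (Bmap a) w.

Definition in_basin0 (a : Cx) (w : Csphere) : Prop :=
  forall eps : R, 0 < eps -> exists N : nat, forall n : nat, (N <= n)%nat ->
    exists z : Cx, orbit a n w = Some z /\ Cnorm z < eps.

Definition in_basinInf (a : Cx) (w : Csphere) : Prop :=
  forall M : R, exists N : nat, forall n : nat, (N <= n)%nat ->
    match orbit a n w with
    | None => True
    | Some z => M < Cnorm z
    end.

(* The free critical point c_+ (for a <> 0, |a| <> 1):
   c_+ = a/(3|a|^2) (2 + |a|^2 + sqrt((|a|^2-4)(|a|^2-1))),
   with sqrt x := i sqrt(-x) for x < 0. *)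
Definition c_plus (a : Cx) : Cx :=
  let r := Cnorm2 a in
  let D := (r - 4) * (r - 1) in
  let s : Cx := if Rle_dec 0 D then (sqrt D, 0) else (0, sqrt (- D)) in
  Cmul (Cscale (/ (3 * r)) a) (Cadd (2 + r, 0) s).

(* Escaping parameters E and non-escaping parameters B. *)
Definition escaping (a : Cx) : Prop :=
  a <> C0 /\ Cnorm a <> 1 /\
  (in_basin0 a (Some (c_plus a)) \/ in_basinInf a (Some (c_plus a))).

Definition nonescaping (a : Cx) : Prop :=
  a <> C0 /\ Cnorm a <> 1 /\
  ~ (in_basin0 a (Some (c_plus a)) \/ in_basinInf a (Some (c_plus a))).

(* Main.v *)
Require Import Defs.
From Stdlib Require Import Reals.
From Stdlib Require Import Lra Psatz.
Open Scope R_scope.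

Lemma cplus_real a1 a2 r : r = a1*a1+a2*a2 -> 0 < r -> 0 <= (r-4)*(r-1) ->
  c_plus (a1,a2) = (((2+r+sqrt((r-4)*(r-1)))/(3*r))*a1, ((2+r+sqrt((r-4)*(r-1)))/(3*r))*a2).
Proof.
intros Hr H0 HD. unfold c_plus, Cnorm2; cbv zeta; simpl fst; simpl snd. rewrite <- Hr.
destruct (Rle_dec 0 _) as [_|n]; [|lra].
unfold Cmul, Cscale, Cadd; simpl. f_equal; field; lra.
Qed.

Lemma N2mul z w : Cnorm2 (Cmul z w) = Cnorm2 z * Cnorm2 w.
Proof. destruct z, w; unfold Cnorm2, Cmul; simpl; ring. Qed.

Lemma N2nn z : 0 <= Cnorm2 z.
Proof. destruct z; unfold Cnorm2; simpl; nra. Qed.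

Lemma N2pos z : z <> Defs.C0 -> 0 < Cnorm2 z.
Proof.
destruct z as [x y]; unfold Cnorm2; simpl; intro H.
destruct (Req_dec x 0), (Req_dec y 0); subst; [elim H; reflexivity| nra..].
Qed.

Lemma N2inv z : 0 < Cnorm2 z -> Cnorm2 (Cinv z) = / Cnorm2 z.
Proof. destruct z; unfold Cinv, Cnorm2 in *; simpl in *; intro; field; lra. Qed.

Lemma Bnorm a z w : Bmap a (Some z) = Some w ->
  0 < Cnorm2 (Csub Defs.C1 (Cmul (Cconj a) z)) /\
  Cnorm2 w * Cnorm2 (Csub Defs.C1 (Cmul (Cconj a) z)) =
  Cnorm2 z * Cnorm2 z * Cnorm2 z * Cnorm2 (Csub z a).
Proof.
unfold Bmap; cbv zeta. destruct Ceq_dec as [e|ne]; intro Hw; [discriminate|].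
injection Hw; intros <-. pose proof (N2pos _ ne). split; auto.
unfold Cdiv. rewrite N2mul, N2inv by auto. rewrite !N2mul. field; lra.
Qed.

Lemma orbit_None a n : orbit a n None = None.
Proof. induction n; auto. change (orbit a (S n) None) with (Bmap a (orbit a n None)). rewrite IHn; reflexivity. Qed.

Lemma orbit_shift a n w : orbit a (S n) w = orbit a n (Bmap a w).
Proof.
induction n; [reflexivity|].
change (orbit a (S (S n)) w) with (Bmap a (orbit a (S n) w)). rewrite IHn. reflexivity.
Qed.

Lemma lt_sqrt M x : M * M < x -> M < sqrt x.
Proof.
intro H. destruct (Rlt_or_le M 0).
- pose proof (sqrt_pos x); lra.
- rewrite <- (sqrt_square M) by lra. apply sqrt_lt_1_alt; nra.
Qed.

Lemma escape a (P : Cx -> Prop) d : 0 < d ->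
  (forall z w, P z -> Bmap a (Some z) = Some w -> P w /\ Cnorm2 z + d <= Cnorm2 w) ->
  forall z0, P z0 -> in_basinInf a (Some z0).
Proof.
intros hd H z0 Hz0.
assert (Inv: forall n, match orbit a n (Some z0) with None => True
   | Some z => P z /\ Cnorm2 z0 + INR n * d <= Cnorm2 z end).
{ induction n.
  - simpl. split; auto; lra.
  - change (orbit a (S n) (Some z0)) with (Bmap a (orbit a n (Some z0))).
    destruct (orbit a n (Some z0)) as [z|] eqn:E; [|exact I].
    destruct IHn as [Pz Hz].
    destruct (Bmap a (Some z)) as [w|] eqn:E2; [|exact I].
    destruct (H z w Pz E2). split; auto. rewrite S_INR. lra. }
intros M. destruct (INR_unbounded (M*M/d)) as [N HN]. exists N. intros n Hn.
specialize (Inv n). destruct (orbit a n (Some z0)) as [z|]; auto.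
destruct Inv as [_ Hz]. apply lt_sqrt.
pose proof (le_INR _ _ Hn). pose proof (N2nn z0).
assert (M*M < INR N * d).
{ assert (M*M/d*d = M*M) by (field; lra). nra. }
nra.
Qed.

Lemma Cnorm_sqrt_cmp a c : 0 <= c -> (Cnorm a < sqrt c <-> Cnorm2 a < c).
Proof.
intro hc. unfold Cnorm. pose proof (N2nn a). split.
- apply sqrt_lt_0_alt.
- intro; apply sqrt_lt_1_alt; lra.
Qed.

Lemma sqrt_sq x : 0 <= x -> sqrt (x*x) = x.
Proof. intro; apply sqrt_square; auto. Qed.

Lemma p1_step r s s0 W Dn Nn : r < 1 -> 1 < s0 <= s -> 0 < Dn ->
  Dn - Nn = (1-r)*(1-s) -> W * Dn = s*s*s*Nn -> s + (s0 - 1) <= W.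
Proof.
intros Hr Hs HD Hid HW.
assert (Nn > Dn) by nra.
assert (s*s*s <= W).
{ apply Rmult_le_reg_r with Dn; auto. rewrite HW. assert (0 < s*s*s) by
  (apply Rmult_lt_0_compat; [apply Rmult_lt_0_compat|]; lra). nra. }
nra.
Qed.

Lemma part1 a : 0 < Cnorm a < 1 -> escaping a.
Proof.
intros [H0 H1]. destruct a as [a1 a2].
set (r := a1*a1+a2*a2).
assert (Hr1 : r < 1).
{ apply (Cnorm_sqrt_cmp (a1,a2) 1); [lra|]. rewrite sqrt_1. exact H1. }
assert (Hr0 : 0 < r).
{ pose proof (N2nn (a1,a2)). destruct (Req_dec r 0) as [e|]; [|unfold Cnorm2 in *; simpl in *; fold r in H; lra].
  unfold Cnorm, Cnorm2 in H0; simpl in H0. fold r in H0. rewrite e, sqrt_0 in H0. lra. }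
split; [|split].
- intro e; injection e; intros; subst. unfold r in Hr0; lra.
- lra.
- right.
  assert (HD : 0 <= (r-4)*(r-1)) by nra.
  rewrite (cplus_real a1 a2 r) by auto.
  set (sg := sqrt ((r-4)*(r-1))).
  assert (sg0 : 0 <= sg) by apply sqrt_pos.
  set (t := (2+r+sg)/(3*r)).
  set (c := (t*a1, t*a2)).
  set (s0 := Cnorm2 c).
  assert (Hs0 : 1 < s0).
  { unfold s0, c, Cnorm2; simpl.
    replace (t*a1*(t*a1)+t*a2*(t*a2)) with (t*t*r) by (unfold r; ring).
    unfold t. replace ((2 + r + sg) / (3 * r) * ((2 + r + sg) / (3 * r)) * r)
      with ((2+r+sg)*(2+r+sg)/(9*r)) by (field; lra).
    apply Rmult_lt_reg_r with (9*r); [lra|].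
    unfold Rdiv; rewrite Rmult_assoc, Rinv_l by lra. nra. }
  apply (escape (a1,a2) (fun z => s0 <= Cnorm2 z) (s0 - 1)); [lra| |unfold s0; apply Rle_refl].
  intros z w Pz Hb. destruct (Bnorm _ _ _ Hb) as [HD' HW].
  assert (Hid : Cnorm2 (Csub Defs.C1 (Cmul (Cconj (a1, a2)) z)) - Cnorm2 (Csub z (a1, a2))
     = (1 - r) * (1 - Cnorm2 z)).
  { destruct z; unfold Cnorm2, Csub, Cmul, Cconj, Defs.C1, r; simpl; ring. }
  pose proof (p1_step r (Cnorm2 z) s0 _ _ _ Hr1 (conj Hs0 Pz) HD' Hid HW). lra.
Qed.

Lemma Cnorm_cmp_le a c : 0 <= c -> Cnorm a <= sqrt c -> Cnorm2 a <= c.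
Proof.
intros hc H. destruct (Rle_or_lt (Cnorm2 a) c); auto.
exfalso. unfold Cnorm in H. pose proof (sqrt_lt_1_alt c (Cnorm2 a) (conj hc H0)). lra.
Qed.

Lemma cplus_circle a1 a2 r : r = a1*a1+a2*a2 -> 1 < r <= 4 ->
  Cnorm2 (c_plus (a1,a2)) = 1.
Proof.
intros Hr Hb. unfold c_plus; cbv zeta.
replace (Cnorm2 (a1,a2)) with r by (rewrite Hr; reflexivity).
rewrite N2mul.
assert (E1 : Cnorm2 (Cscale (/ (3 * r)) (a1, a2)) = /(9*r)).
{ unfold Cnorm2, Cscale; simpl.
  replace (/ (3 * r) * a1 * (/ (3 * r) * a1) + / (3 * r) * a2 * (/ (3 * r) * a2))
    with (/ (3 * r) * / (3 * r) * (a1*a1+a2*a2)) by ring.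
  rewrite <- Hr. field. lra. }
rewrite E1.
destruct (Rle_dec 0 ((r - 4) * (r - 1))) as [h|h].
- assert (E : (r-4)*(r-1) = 0) by nra. rewrite E, sqrt_0.
  unfold Cnorm2, Cadd; simpl.
  replace ((2 + r + 0) * (2 + r + 0) + (0 + 0) * (0 + 0)) with (9*r) by nra.
  field; lra.
- pose proof (sqrt_sqrt (- ((r - 4) * (r - 1)))) as Hs.
  unfold Cnorm2, Cadd; simpl.
  replace ((2 + r + 0) * (2 + r + 0) + (0 + sqrt (- ((r - 4) * (r - 1)))) * (0 + sqrt (- ((r - 4) * (r - 1)))))
    with (9*r) by (rewrite Rplus_0_l, Hs by lra; ring).
  field; lra.
Qed.

Lemma circle_step a1 a2 r z : r = a1*a1+a2*a2 -> r <> 1 -> Cnorm2 z = 1 ->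
  exists w, Bmap (a1,a2) (Some z) = Some w /\ Cnorm2 w = 1.
Proof.
intros Hr Hr1 Hz.
assert (Hid : Cnorm2 (Csub Defs.C1 (Cmul (Cconj (a1, a2)) z)) = Cnorm2 (Csub z (a1, a2))).
{ destruct z as [z1 z2]; unfold Cnorm2, Csub, Cmul, Cconj, Defs.C1 in *; simpl in *.
  assert (Hr' : a1*a1+a2*a2 = r) by lra. nra. }
assert (HN : 0 < Cnorm2 (Csub z (a1, a2))).
{ apply N2pos. destruct z as [z1 z2]; unfold Csub, Defs.C0; simpl. intro e; injection e; intros.
  unfold Cnorm2 in Hz; simpl in Hz. apply Hr1. assert (z1 = a1) by lra. assert (z2 = a2) by lra. subst. lra. }
destruct (Bmap (a1,a2) (Some z)) as [w|] eqn:E.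
- exists w; split; auto. destruct (Bnorm _ _ _ E) as [HD HW]. rewrite Hz, Hid in HW.
  nra.
- exfalso. unfold Bmap in E; cbv zeta in E. destruct Ceq_dec as [e|]; [|discriminate].
  rewrite e in Hid. rewrite <- Hid in HN. unfold Cnorm2, Defs.C0 in HN; simpl in HN. lra.
Qed.

Lemma part2 a : 1 < Cnorm a <= 2 -> nonescaping a.
Proof.
intros [H1 H2]. destruct a as [a1 a2].
set (r := a1*a1+a2*a2).
assert (Hr1 : 1 < r).
{ destruct (Rle_or_lt r 1); auto. exfalso.
  assert (Cnorm (a1,a2) <= 1); [|lra].
  rewrite <- sqrt_1. apply sqrt_le_1_alt. exact H. }
assert (Hr4 : r <= 4).
{ apply (Cnorm_cmp_le (a1,a2) 4); [lra|]. replace 4 with (2*2) by ring. rewrite sqrt_sq; lra. }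
assert (Inv : forall n, exists z, orbit (a1,a2) n (Some (c_plus (a1,a2))) = Some z /\ Cnorm2 z = 1).
{ induction n.
  - exists (c_plus (a1,a2)); split; [reflexivity|]. apply (cplus_circle a1 a2 r); auto; lra.
  - destruct IHn as [z [Ez Hz]].
    destruct (circle_step a1 a2 r z) as [w [Ew Hw]]; auto; try lra.
    exists w; split; auto.
    change (orbit (a1,a2) (S n) (Some (c_plus (a1,a2)))) with (Bmap (a1,a2) (orbit (a1,a2) n (Some (c_plus (a1,a2))))).
    rewrite Ez; exact Ew. }
split; [|split].
- intro e; injection e; intros; subst. unfold r in Hr1; lra.
- lra.
- intros [B0|BI].
  + destruct (B0 (1/2)) as [N HN]; [lra|].
    destruct (HN N (le_n N)) as [z [Ez Hz]].
    destruct (Inv N) as [z' [Ez' Hz']]. rewrite Ez in Ez'. injection Ez'; intros; subst.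
    unfold Cnorm in Hz. rewrite Hz', sqrt_1 in Hz. lra.
  + destruct (BI 2) as [N HN]. specialize (HN N (le_n N)).
    destruct (Inv N) as [z' [Ez' Hz']]. rewrite Ez' in HN.
    unfold Cnorm in HN. rewrite Hz', sqrt_1 in HN. lra.
Qed.

Lemma p3_step r s x y W : x*x+y*y = r*s -> 4*r <= s -> 10000 <= r ->
  0 < 1-2*x+r*s -> W*(1-2*x+r*s) = s*s*s*(s-2*x+r) -> 4*s <= W.
Proof.
intros Hl Hs Hr HD HW.
assert (Hx : x*x <= r*s) by nra.
assert (Hx2 : 4*(x*x) <= s*s) by nra.
assert (Hxs : 2*x <= s) by nra.
assert (Hxs' : -s <= 2*x) by nra.
assert (HN : r <= s-2*x+r) by lra.
assert (HDu : 1-2*x+r*s <= 1+s+r*s) by lra.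
assert (Hs3 : s*s*s*r <= W*(1-2*x+r*s)).
{ rewrite HW. assert (0 <= s*s*s) by (apply Rmult_le_pos; [apply Rmult_le_pos|]; lra). nra. }
assert (Hbig : 4*s*(1+s+r*s) <= s*s*s*r).
{ assert (H1 : 40000 <= s) by lra.
  assert (H2 : 1 <= r*s) by nra.
  assert (H3 : 40000*(r*s) <= s*(r*s)) by nra.
  assert (4*(1+s+r*s) <= s*r*s) by nra.
  nra. }
destruct (Rle_or_lt (4*s) W); auto.
assert (W*(1-2*x+r*s) < 4*s*(1-2*x+r*s)) by (apply Rmult_lt_compat_r; lra).
nra.
Qed.

Lemma p3_init r t W : 10000 <= r -> 0.66 <= t <= 2/3 ->
  W*((1-t*r)*(1-t*r)) = (t*t*r)*(t*t*r)*(t*t*r)*((t-1)*(t-1)*r) -> 4*r <= W.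
Proof.
intros Hr Ht HW.
set (u := t*r - 1).
assert (Hu0 : 0 < u) by (unfold u; nra).
assert (Hur : u <= r) by (unfold u; nra).
assert (Ht2 : 0.4356 <= t*t) by nra.
assert (Ht6 : 0.08 <= (t*t)*(t*t)*(t*t)).
{ assert (0.1897 <= (t*t)*(t*t)) by nra. nra. }
assert (Ht1 : 1/9 <= (t-1)*(t-1)) by nra.
assert (E : (1-t*r)*(1-t*r) = u*u) by (unfold u; ring).
rewrite E in HW.
assert (HR : (t*t*r)*(t*t*r)*(t*t*r)*((t-1)*(t-1)*r) = ((t*t)*(t*t)*(t*t)*((t-1)*(t-1)))*(r*r*r*r)) by ring.
rewrite HR in HW.
assert (Hc : 0.08/9 <= (t*t)*(t*t)*(t*t)*((t-1)*(t-1))) by nra.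
assert (Hr4 : 0 <= r*r*r*r) by (apply Rmult_le_pos; [apply Rmult_le_pos; [apply Rmult_le_pos|]|]; lra).
assert (L : 0.08/9*(r*r*r*r) <= W*(u*u)) by (rewrite HW; nra).
assert (L2 : 4*r*(u*u) <= 0.08/9*(r*r*r*r)).
{ assert (u*u <= r*r) by nra. assert (0 <= r*r) by nra. nra. }
destruct (Rle_or_lt (4*r) W); auto.
assert (W*(u*u) < 4*r*(u*u)) by (apply Rmult_lt_compat_r; nra).
lra.
Qed.

Lemma part3 a : 100 < Cnorm a -> in_basinInf a (Some (c_plus a)).
Proof.
intro H. destruct a as [a1 a2].
set (r := a1*a1+a2*a2).
assert (Hr : 10000 < r).
{ destruct (Rle_or_lt r 10000); auto. exfalso.
  assert (Cnorm (a1,a2) <= 100); [|lra].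
  rewrite <- (sqrt_sq 100) by lra. apply sqrt_le_1_alt. unfold Cnorm2; simpl; fold r; lra. }
assert (HD : 0 <= (r-4)*(r-1)) by nra.
rewrite (cplus_real a1 a2 r) by (auto; lra).
set (sg := sqrt ((r-4)*(r-1))).
assert (Hsg1 : sg <= r - 2).
{ unfold sg. rewrite <- (sqrt_sq (r-2)) by lra. apply sqrt_le_1_alt. nra. }
assert (Hsg2 : r - 3 <= sg).
{ unfold sg. rewrite <- (sqrt_sq (r-3)) by lra. apply sqrt_le_1_alt. nra. }
set (t := (2+r+sg)/(3*r)).
assert (Ht : t*(3*r) = 2+r+sg) by (unfold t; field; lra).
assert (Htb : 0.66 <= t <= 2/3) by (split; nra).
set (c := (t*a1, t*a2)).
assert (Hstep : forall z w, 4*r <= Cnorm2 z -> Bmap (a1,a2) (Some z) = Some w ->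
   4*r <= Cnorm2 w /\ Cnorm2 z + 1 <= Cnorm2 w).
{ intros z w Pz Hb. destruct (Bnorm _ _ _ Hb) as [HD' HW].
  destruct z as [z1 z2].
  assert (E1 : Cnorm2 (Csub Defs.C1 (Cmul (Cconj (a1, a2)) (z1,z2))) =
     1 - 2*(a1*z1+a2*z2) + r*Cnorm2 (z1,z2)) by (unfold Cnorm2, Csub, Cmul, Cconj, Defs.C1, r; simpl; ring).
  assert (E2 : Cnorm2 (Csub (z1,z2) (a1,a2)) = Cnorm2 (z1,z2) - 2*(a1*z1+a2*z2) + r)
    by (unfold Cnorm2, Csub, r; simpl; ring).
  rewrite E1 in HD', HW. rewrite E2 in HW.
  pose proof (p3_step r (Cnorm2 (z1,z2)) (a1*z1+a2*z2) (a1*z2-a2*z1) (Cnorm2 w)) as P.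
  assert (4 * Cnorm2 (z1,z2) <= Cnorm2 w).
  { apply P; auto; try lra. unfold Cnorm2, r; simpl; ring. }
  split; lra. }
change (in_basinInf (a1,a2) (Some c)).
destruct (Bmap (a1,a2) (Some c)) as [w|] eqn:E.
- assert (Pw : 4*r <= Cnorm2 w).
  { destruct (Bnorm _ _ _ E) as [HD' HW].
    assert (E1 : Cnorm2 (Csub Defs.C1 (Cmul (Cconj (a1, a2)) c)) = (1-t*r)*(1-t*r))
      by (unfold c, Cnorm2, Csub, Cmul, Cconj, Defs.C1, r; simpl; ring).
    assert (E2 : Cnorm2 (Csub c (a1,a2)) = (t-1)*(t-1)*r)
      by (unfold c, Cnorm2, Csub, r; simpl; ring).
    assert (E3 : Cnorm2 c = t*t*r) by (unfold c, Cnorm2, r; simpl; ring).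
    rewrite E1 in HW. rewrite E2, E3 in HW.
    apply (p3_init r t); auto; lra. }
  pose proof (escape (a1,a2) (fun z => 4*r <= Cnorm2 z) 1 ltac:(lra) Hstep w Pw) as HB.
  intros M. destruct (HB M) as [N HN]. exists (S N). intros n Hn.
  destruct n; [lia|]. rewrite orbit_shift, E. apply HN. lia.
- intros M. exists 1%nat. intros n Hn. destruct n; [lia|].
  rewrite orbit_shift, E, orbit_None. exact I.
Qed.

Theorem mainTheorem10 :
  (forall a : Cx, 0 < Cnorm a < 1 -> escaping a) /\
  (forall a : Cx, 1 < Cnorm a <= 2 -> nonescaping a) /\
  (exists M : R, forall a : Cx, nonescaping a -> Cnorm a <= M).
Proof.
split; [exact part1|split; [exact part2|]].
exists 100. intros a [_ [_ H]].
destruct (Rle_or_lt (Cnorm a) 100); auto.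
exfalso. apply H. right. apply part3; auto.
Qed.
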